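(* Consider two-level PFASST for a linear problem with Gauss–Radau nodes as described in the context, with preconditioning using the LU trick, and assume $\mathbf{A}$ and $\tilde{\mathbf{A}}$ are invertible. For $k\in\mathbb{N}$ smoothing steps let $\mathbf{T}_{\mathrm{PFASST}}(\mu,k)=\big(\mathbf{T}_S(\mu)\big)^k\,\mathbf{T}_{\mathrm{CGC}}(\mu)$. Then PFASST converges if $\mu$ is large enough and at least $M$ smoothing steps are performed: for every $k\ge M$ there exist a fixed value $\mu^*_\infty>0$ and a constant $c>0$ independent of $\mu$ (but depending on $k$) such that for all $\mu>\mu^*_\infty$, $$\rho\big(\mathbf{T}_{\mathrm{PFASST}}(\mu,k)\big)\le\frac{c}{\mu}.$$
   Context: Fix positive integers $L$ (time steps), $M$ (collocation nodes), $N$ (spatial degrees of freedom). Let $0<\tau_1<\dots<\tau_M=1$ be the (right) Gauss–Radau nodes on $[0,1]$, $\ell_j$ the Lagrange basis polynomials, $\mathbf{Q}=(q_{m,j})$ with $q_{m,j}=\int_0^{\tau_m}\ell_j(s)\,ds$. LU trick: $\mathbf{Q}^T=\mathbf{L}_Q\mathbf{U}_Q$ with $\mathbf{L}_Q$ unit lower triangular, $\mathbf{U}_Q$ upper triangular, and $\mathbf{Q}_\Delta=\mathbf{U}_Q^T$; on the coarse level, with $\tilde M\le M$ coarse Gauss–Radau nodes and corresponding collocation matrix $\tilde{\mathbf{Q}}$, analogously $\tilde{\mathbf{Q}}_\Delta$ is obtained from the LU decomposition of $\tilde{\mathbf{Q}}^T$. Let $\mathbf{A}\in\mathbb{C}^{N\times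 N}$, $\tilde{\mathbf{A}}\in\mathbb{C}^{\tilde N\times\tilde N}$ ($\tilde N\le N$), $\mu>0$. Let $\mathbf{N}_M$ ($M\times M$) and $\tilde{\mathbf{N}}_{\tilde M}$ ($\tilde M\times\tilde M$) have ones in their last column and zeros elsewhere, $\mathbf{H}=\mathbf{N}_M\otimes\mathbf{I}_N$, $\tilde{\mathbf{H}}=\tilde{\mathbf{N}}_{\tilde M}\otimes\mathbf{I}_{\tilde N}$, $\mathbf{E}\in\mathbb{R}^{L\times L}$ with ones on the first subdiagonal and zeros elsewhere. $\mathbf{C}=\mathbf{I}_{LMN}-\mu\,\mathbf{I}_L\otimes\mathbf{Q}\otimes\mathbf{A}-\mathbf{E}\otimes\mathbf{H}$, $\hat{\mathbf{P}}=\mathbf{I}_{LMN}-\mu\,\mathbf{I}_L\otimes\mathbf{Q}_\Delta\otimes\mathbf{A}$, $\tilde{\mathbf{P}}=\mathbf{I}_{L\tilde M\tilde N}-\mu\,\mathbf{I}_L\otimes\tilde{\mathbf{Q}}_\Delta\otimes\tilde{\mathbf{A}}-\mathbf{E}\otimes\tilde{\mathbf{H}}$, both assumed invertible. Restriction $\mathbf{T}_F^C=\mathbf{I}_L\otimes\mathbf{T}_{F,Q}^C\otimes\mathbf{T}_{F,A}^C\in\mathbb{R}^{L\tilde M\tilde N\times LMN}$ and interpolation $\mathbf{T}_C^F=\mathbf{I}_L\otimes\mathbf{T}_{C,Q}^F\otimes\mathbf{T}_{C,A}^F\in\mathbb{R}^{LMN\times L\tilde M\tilde N}$, with $(\mathbf{E}\otimes\tilde{\mathbf{H}})\mathbf{T}_F^C=\mathbf{T}_F^C(\mathbf{E}\otimes\mathbf{H})$.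 $\mathbf{T}_S(\mu)=\mathbf{I}_{LMN}-\hat{\mathbf{P}}^{-1}\mathbf{C}$ and $\mathbf{T}_{\mathrm{CGC}}(\mu)=\mathbf{I}_{LMN}-\mathbf{T}_C^F\tilde{\mathbf{P}}^{-1}\mathbf{T}_F^C\mathbf{C}$. $\rho$ is the spectral radius. *)

(* Defs.v *)
From HB Require Import structures.
From mathcomp Require Import all_boot all_order all_algebra.
From mathcomp Require Import reals.
From mathcomp Require Import complex mxtens.
Set Implicit Arguments.
Unset Strict Implicit.
Unset Printing Implicit Defensive.
Import Order.TTheory GRing.Theory Num.Theory.
Local Open Scope ring_scope.

Section Defs.
Variable R : realType.
Local Notation C := R[i].

Definition poly_int0 (p : {poly R}) (t : R) : R :=
  \sum_(i < size p) p`_i * t ^+ i.+1 / i.+1%:R.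

Definition lagrange_basis (M : nat) (tau : 'I_M -> R) (j : 'I_M) : {poly R} :=
  \prod_(k < M | k != j) (('X - (tau k)%:P) * ((tau j - tau k)^-1)%:P).

Definition colloc_matrix (M : nat) (tau : 'I_M -> R) : 'M[R]_M :=
  \matrix_(m, j) poly_int0 (lagrange_basis tau j) (tau m).

Definition right_gauss_radau (M : nat) (tau : 'I_M -> R) : Prop :=
  [/\ (0 < M)%N,
      (forall i j : 'I_M, (i < j)%N -> tau i < tau j),
      (forall i : 'I_M, 0 < tau i),
      (forall i : 'I_M, i.+1 = M -> tau i = 1) &
      exists w : 'I_M -> R, forall p : {poly R}, (size p <= 2 * M - 1)%N ->
        poly_int0 p 1 = \sum_(j < M) w j * p.[tau j]].

Definition unit_lower_triangular (n : nat) (A : 'M[R]_n) : Prop :=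
  (forall i j : 'I_n, (i < j)%N -> A i j = 0) /\ (forall i, A i i = 1).

Definition upper_triangular (n : nat) (A : 'M[R]_n) : Prop :=
  forall i j : 'I_n, (j < i)%N -> A i j = 0.

Definition cplx_mx (m n : nat) (A : 'M[R]_(m, n)) : 'M[C]_(m, n) :=
  map_mx (real_complex R) A.

Definition lastcol_mx (n : nat) : 'M[C]_n := \matrix_(i, j) (j.+1 == n)%:R.

Definition subdiag_mx (n : nat) : 'M[C]_n := \matrix_(i, j) (i == j.+1 :> nat)%:R.

Definition Hmat (M N : nat) : 'M[C]_(M * N) := lastcol_mx M *t (1%:M : 'M[C]_N).

(* All Kronecker products are bracketed as I_L (x) (X (x) Y),
   i.e. the global index is (l, (m, n)) in lexicographic order. *)

Definition Cmat (L M N : nat) (mu : R) (Q : 'M[R]_M) (A : 'M[C]_N)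
  : 'M[C]_(L * (M * N)) :=
  1%:M - (mu%:C)%C *: ((1%:M : 'M[C]_L) *t (cplx_mx Q *t A))
       - subdiag_mx L *t @Hmat M N.

Definition Phat (L M N : nat) (mu : R) (QD : 'M[R]_M) (A : 'M[C]_N)
  : 'M[C]_(L * (M * N)) :=
  1%:M - (mu%:C)%C *: ((1%:M : 'M[C]_L) *t (cplx_mx QD *t A)).

Definition Ptilde (L Mc Nc : nat) (mu : R) (QDc : 'M[R]_Mc) (Ac : 'M[C]_Nc)
  : 'M[C]_(L * (Mc * Nc)) :=
  1%:M - (mu%:C)%C *: ((1%:M : 'M[C]_L) *t (cplx_mx QDc *t Ac))
       - subdiag_mx L *t @Hmat Mc Nc.

Definition transfer (L p q r s : nat) (TQ : 'M[R]_(p, q)) (TA : 'M[R]_(r, s))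
  : 'M[C]_(L * (p * r), L * (q * s)) :=
  (1%:M : 'M[C]_L) *t (cplx_mx TQ *t cplx_mx TA).

Definition T_S (L M N : nat) (mu : R) (Q QD : 'M[R]_M) (A : 'M[C]_N)
  : 'M[C]_(L * (M * N)) :=
  1%:M - invmx (@Phat L M N mu QD A) *m @Cmat L M N mu Q A.

Definition T_CGC (L M N Mc Nc : nat) (mu : R) (Q : 'M[R]_M) (A : 'M[C]_N)
  (QDc : 'M[R]_Mc) (Ac : 'M[C]_Nc)
  (TFC : 'M[C]_(L * (Mc * Nc), L * (M * N)))
  (TCF : 'M[C]_(L * (M * N), L * (Mc * Nc))) : 'M[C]_(L * (M * N)) :=
  1%:M - TCF *m invmx (@Ptilde L Mc Nc mu QDc Ac) *m TFC *m @Cmat L M N mu Q A.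

Definition T_PFASST (L M N Mc Nc : nat) (mu : R) (k : nat)
  (Q QD : 'M[R]_M) (A : 'M[C]_N) (QDc : 'M[R]_Mc) (Ac : 'M[C]_Nc)
  (TFC : 'M[C]_(L * (Mc * Nc), L * (M * N)))
  (TCF : 'M[C]_(L * (M * N), L * (Mc * Nc))) : 'M[C]_(L * (M * N)) :=
  (@T_S L M N mu Q QD A) ^+ k *m @T_CGC L M N Mc Nc mu Q A QDc Ac TFC TCF.

Definition spectral_radius (n : nat) (A : 'M[C]_n) : R :=
  \big[Num.max/0]_(z <- sval (closed_field_poly_normal (char_poly A))) ComplexField.Normc.normc z.

End Defs.

Arguments Cmat {R} L {M N} mu Q A.
Arguments Phat {R} L {M N} mu QD A.
Arguments Ptilde {R} L {Mc Nc} mu QDc Ac.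
Arguments transfer {R} L {p q r s} TQ TA.
Arguments T_S {R} L {M N} mu Q QD A.
Arguments T_CGC {R} L {M N Mc Nc} mu Q A QDc Ac TFC TCF.
Arguments T_PFASST {R} L {M N Mc Nc} mu k Q QD A QDc Ac TFC TCF.
Arguments Hmat {R} M N.
Arguments subdiag_mx {R} n.
Arguments lastcol_mx {R} n.

(* Main.v *)
Require Import Defs.
From HB Require Import structures.
From mathcomp Require Import all_boot all_order all_algebra.
From mathcomp Require Import reals.
From mathcomp Require Import complex mxtens.
From mathcomp Require Import ring lra zify.
Set Implicit Arguments. Unset Strict Implicit. Unset Printing Implicit Defensive.
Import Order.TTheory GRing.Theory Num.Theory.
Local Open Scope ring_scope.

Section Norm.
Variable R : realType.
Local Notation C := R[i].
Local Notation nc := (@ComplexField.Normc.normc R).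

Lemma nc_ge0 (z : C) : 0 <= nc z.
Proof. by case: z => a b; rewrite /= sqrtr_ge0. Qed.

Lemma ncD (x y : C) : nc (x + y) <= nc x + nc y.
Proof. exact: le_normcD. Qed.

Lemma ncM (x y : C) : nc (x * y) = nc x * nc y.
Proof. exact: ComplexField.Normc.normcM. Qed.

Lemma ncN (x : C) : nc (- x) = nc x.
Proof. exact: normcN. Qed.

Lemma nc0 : nc 0 = 0.
Proof. exact: ComplexField.Normc.normc0. Qed.

Lemma ncR (x : R) : nc (x%:C)%C = `|x|.
Proof. by rewrite /= expr0n /= addr0 sqrtr_sqr. Qed.

Lemma ncsum I (r : seq I) (P : pred I) (F : I -> C) :
  nc (\sum_(i <- r | P i) F i) <= \sum_(i <- r | P i) nc (F i).
Proof.
elim/big_rec2: _ => [|i y z _ IH]; first by rewrite nc0.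
by apply: le_trans (ncD _ _) _; rewrite lerD2l.
Qed.

Definition nm m n (A : 'M[C]_(m, n)) : R := \sum_i \sum_j nc (A i j).

Lemma nm_ge0 m n (A : 'M[C]_(m, n)) : 0 <= nm A.
Proof. by apply: sumr_ge0 => i _; apply: sumr_ge0 => j _; apply: nc_ge0. Qed.

Lemma nmD m n (A B : 'M[C]_(m, n)) : nm (A + B) <= nm A + nm B.
Proof.
rewrite /nm -big_split /=; apply: ler_sum => i _.
rewrite -big_split /=; apply: ler_sum => j _; rewrite mxE; exact: ncD.
Qed.

Lemma nmN m n (A : 'M[C]_(m, n)) : nm (- A) = nm A.
Proof. by apply: eq_bigr => i _; apply: eq_bigr => j _; rewrite mxE ncN. Qed.

Lemma nmB m n (A B : 'M[C]_(m, n)) : nm (A - B) <= nm A + nm B.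
Proof. by apply: le_trans (nmD _ _) _; rewrite nmN. Qed.

Lemma nmZ m n (a : C) (A : 'M[C]_(m, n)) : nm (a *: A) = nc a * nm A.
Proof.
rewrite /nm mulr_sumr; apply: eq_bigr => i _; rewrite mulr_sumr.
by apply: eq_bigr => j _; rewrite mxE ncM.
Qed.

Lemma nm_entry m n (A : 'M[C]_(m, n)) i j : nc (A i j) <= nm A.
Proof.
rewrite /nm (bigD1 i) //= (bigD1 j) //= -addrA lerDl addr_ge0 //.
  by apply: sumr_ge0 => k _; apply: nc_ge0.
by apply: sumr_ge0 => k _; apply: sumr_ge0 => l _; apply: nc_ge0.
Qed.

Lemma nm_row m n (A : 'M[C]_(m, n)) i : \sum_j nc (A i j) <= nm A.
Proof.
rewrite /nm (bigD1 i) //= lerDl.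
by apply: sumr_ge0 => k _; apply: sumr_ge0 => l _; apply: nc_ge0.
Qed.

Lemma nmM m n p (A : 'M[C]_(m, n)) (B : 'M[C]_(n, p)) :
  nm (A *m B) <= nm A * nm B.
Proof.
rewrite /nm mulr_suml; apply: ler_sum => i _.
apply: (@le_trans _ _ (\sum_j \sum_k nc (A i k) * nc (B k j))).
  apply: ler_sum => j _; rewrite mxE; apply: le_trans (ncsum _ _ _) _.
  by apply: ler_sum => k _; rewrite ncM.
rewrite exchange_big /= mulr_suml; apply: ler_sum => k _.
rewrite -mulr_sumr; apply: ler_wpM2l; first exact: nc_ge0.
exact: nm_row.
Qed.

Lemma nm1 n : nm (1%:M : 'M[C]_n) = n%:R.
Proof.
rewrite /nm -[n in RHS]card_ord -sumr_const; apply: eq_bigr => i _.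
rewrite (bigD1 i) //= big1 ?addr0 => [|j /negbTE ji].
  by rewrite mxE eqxx /= expr1n expr0n /= addr0 sqrtr1.
by rewrite mxE eq_sym ji /= expr0n /= addr0 sqrtr0.
Qed.

Lemma eig_bound n (T : 'M[C]_n) z : root (char_poly T) z -> nc z <= nm T.
Proof.
rewrite -eigenvalue_root_char => /eigenvalueP [v vT vn0].
have S0 : 0 < \sum_j nc (v 0 j).
  rewrite lt_def sumr_ge0 ?andbT; last by move=> j _; apply: nc_ge0.
  apply: contra vn0 => /eqP S0; apply/eqP/matrixP => i j; rewrite (ord1 i) mxE.
  apply: ComplexField.Normc.eq0_normc; apply/eqP; rewrite eq_le nc_ge0 andbT.
  rewrite -S0 (bigD1 j) //= lerDl; apply: sumr_ge0 => k _; exact: nc_ge0.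
rewrite -(ler_pM2r S0).
have -> : nc z * \sum_j nc (v 0 j) = \sum_j nc ((v *m T) 0 j).
  by rewrite mulr_sumr; apply: eq_bigr => j _; rewrite vT mxE ncM.
apply: (@le_trans _ _ (\sum_j \sum_i nc (v 0 i) * nc (T i j))).
  apply: ler_sum => j _; rewrite mxE; apply: le_trans (ncsum _ _ _) _.
  by apply: ler_sum => k _; rewrite ncM.
rewrite exchange_big /= mulr_sumr; apply: ler_sum => i _.
rewrite -mulr_sumr mulrC; apply: ler_wpM2r; first exact: nc_ge0.
exact: nm_row.
Qed.

Lemma spec_le n (T : 'M[C]_n) : spectral_radius T <= nm T.
Proof.
rewrite /spectral_radius; case: closed_field_poly_normal => s /= Hs.
rewrite big_seq; apply: (big_ind (fun x => x <= nm T)); first exact: nm_ge0.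
  by move=> x y hx hy; rewrite ge_max hx hy.
move=> z zs; apply: eig_bound.
rewrite Hs rootZ; last by rewrite (monicP (char_poly_monic T)) oner_eq0.
by rewrite root_prod_XsubC.
Qed.

End Norm.


Section Alg.
Variable R : realType.
Local Notation C := R[i].
Local Notation nc := (@ComplexField.Normc.normc R).

Lemma nm0 m n : nm (0 : 'M[C]_(m, n)) = 0.
Proof. by rewrite -(scale0r (0 : 'M[C]_(m,n))) nmZ nc0 mul0r. Qed.

Lemma ncmu (mu : R) : 0 <= mu -> nc (mu%:C)%C = mu.
Proof. by move=> h; rewrite ncR ger0_norm. Qed.

Lemma zmod_id (V : zmodType) (a b c d e : V) :
  a - (b - c - d) = (a - e) + (d - (b - (e + c))).
Proof.
rewrite !opprB -addrA; congr (a + _); rewrite [RHS]addrCA; congr (d + _).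
by rewrite -addrA addKr.
Qed.

Lemma inv_bound n (P B0 D Dinv : 'M[C]_n) (mu : R) :
  0 < mu -> P \in unitmx -> P = B0 - (mu%:C)%C *: D -> D *m Dinv = 1%:M ->
  2 * nm B0 * nm Dinv <= mu ->
  nm (invmx P) <= 2 * n%:R * nm Dinv / mu.
Proof.
move=> mu0 Pu PE DD hmu.
set Pi := invmx P.
have E1 : Pi *m P = 1%:M by rewrite mulVmx.
have E2 : (mu%:C)%C *: Pi = (Pi *m B0 - 1%:M) *m Dinv.
  rewrite PE mulmxBr -scalemxAr in E1.
  have -> : Pi *m B0 - 1%:M = (mu%:C)%C *: (Pi *m D).
    by rewrite -E1 opprB addrC addrNK.
  by rewrite -scalemxAl -mulmxA DD mulmx1.
have h : mu * nm Pi <= (nm Pi * nm B0 + n%:R) * nm Dinv.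
  rewrite -(ncmu (ltW mu0)) -nmZ E2; apply: le_trans (nmM _ _) _.
  apply: ler_wpM2r; first exact: nm_ge0.
  apply: le_trans (nmB _ _) _; rewrite nm1 lerD2r; exact: nmM.
rewrite ler_pdivlMr //.
have := nm_ge0 Pi; have := nm_ge0 B0; have := nm_ge0 Dinv.
move: h hmu; set x := nm Pi; set b := nm B0; set d := nm Dinv; set N := (n%:R : R).
move=> h hmu d0 b0 x0; nra.
Qed.

Lemma TS_decomp n (D Dinv G B : 'M[C]_n) (mu : R) :
  (1%:M - (mu%:C)%C *: D) \in unitmx -> D *m Dinv = 1%:M ->
  1%:M - invmx (1%:M - (mu%:C)%C *: D) *m (1%:M - (mu%:C)%C *: G - B)
  = (1%:M - Dinv *m G) + (invmx (1%:M - (mu%:C)%C *: D) *m B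
      - invmx (1%:M - (mu%:C)%C *: D) *m (1%:M - Dinv *m G)).
Proof.
move=> Pu DD; set Pi := invmx _.
have E1 : Pi *m (1%:M - (mu%:C)%C *: D) = 1%:M by rewrite mulVmx.
have E3 : Pi - 1%:M = (mu%:C)%C *: (Pi *m D).
  move: E1; rewrite mulmxBr mulmx1 -scalemxAr => <-.
  by rewrite opprB addrC addrNK.
have E2 : Pi *m (Dinv *m G) = Dinv *m G + (mu%:C)%C *: (Pi *m G).
  rewrite mulmxA -[Pi in LHS](subrK 1%:M) E3 !mulmxDl mul1mx addrC.
  by congr (_ + _); rewrite -!scalemxAl -(mulmxA Pi D Dinv) DD mulmx1.
rewrite [Pi *m (1%:M - Dinv *m G)]mulmxBr E2 mulmx1.
rewrite !mulmxBr mulmx1 scalemxAr.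
exact: zmod_id.
Qed.

Lemma nm_pow n (K : 'M[C]_n) a k : 0 <= a -> nm K <= a -> nm (K ^+ k) <= n%:R * a ^+ k.
Proof.
move=> a0 hK; elim: k => [|k IH]; first by rewrite expr0 expr0 mulr1 nm1.
rewrite exprS -mulmxE; apply: le_trans (nmM _ _) _.
rewrite exprS mulrCA; apply: ler_pM => //; exact: nm_ge0.
Qed.

Lemma pow_bound n (X K : 'M[C]_n) a r k : 1 <= a -> nm X <= a -> nm K <= a ->
  nm (X - K) <= r -> nm (X ^+ k - K ^+ k) <= k%:R * n%:R * a ^+ k * r.
Proof.
move=> a1 hX hK hr.
have r0 : 0 <= r by apply: le_trans (nm_ge0 _) hr.
have a0 : 0 <= a by apply: le_trans a1.
elim: k => [|k IH]; first by rewrite !expr0 subrr nm0 !mul0r.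
have -> : X ^+ k.+1 - K ^+ k.+1 = X *m (X ^+ k - K ^+ k) + (X - K) *m K ^+ k.
  rewrite !exprS -!mulmxE mulmxBr mulmxBl addrA addrNK //.
apply: le_trans (nmD _ _) _.
have h1 := le_trans (nmM X (X ^+ k - K ^+ k)) (ler_pM (nm_ge0 _) (nm_ge0 _) hX IH).
have h2 := le_trans (nmM (X - K) (K ^+ k)) (ler_pM (nm_ge0 _) (nm_ge0 _) hr (nm_pow k a0 hK)).
apply: le_trans (lerD h1 h2) _.
have ak0 : 0 <= a ^+ k by apply: exprn_ge0.
have n0 : 0 <= (n%:R : R) by [].
rewrite exprS -natr1.
move: ak0 n0; set u := a ^+ k; set N := (n%:R : R); set kk := (k%:R : R).
have k0 : 0 <= kk by [].
move=> ak0 n0.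
have h : 0 <= (a - 1) * (N * u * r).
  by apply: mulr_ge0; [rewrite subr_ge0 | apply: mulr_ge0 => //; apply: mulr_ge0].
nra.
Qed.

End Alg.


Section Colloc.
Variable R : realType.
Variable M : nat.
Variable tau : 'I_M -> R.
Hypothesis tau_lt : forall i j : 'I_M, (i < j)%N -> tau i < tau j.
Hypothesis tau_pos : forall i : 'I_M, 0 < tau i.

Lemma tau_inj : injective tau.
Proof.
move=> i j e; apply/eqP; apply: contraT => ne.
have [h|h|h] := ltngtP i j.
- by move: (tau_lt h); rewrite e ltxx.
- by move: (tau_lt h); rewrite e ltxx.
- by rewrite (val_inj h) eqxx in ne.
Qed.

Lemma lag_eval j m : (lagrange_basis tau j).[tau m] = (m == j)%:R.
Proof.
rewrite /lagrange_basis horner_prod.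
under eq_bigr => k _ do rewrite hornerM hornerXsubC hornerC.
have [->|ne] := eqVneq m j.
  rewrite big1 // => k kj; apply: divff; rewrite subr_eq0.
  by apply: contra kj => /eqP /tau_inj ->.
by rewrite (bigD1 m) //= subrr mul0r mul0r.
Qed.

Lemma lag_size j : (size (lagrange_basis tau j) <= M)%N.
Proof.
have H : (size (lagrange_basis tau j) <= (\sum_(k < M | k != j) 1).+1)%N.
  rewrite /lagrange_basis.
  elim/big_rec2: _ => [|k n q _ IH]; first by rewrite size_poly1.
  apply: leq_trans (size_mul_leq _ _) _.
  have h1 : (size (('X - (tau k)%:P) * ((tau j - tau k)^-1)%:P)%R <= 2)%N.
    apply: leq_trans (size_mul_leq _ _) _; rewrite size_XsubC size_polyC.
    by case: (_ != 0).
  move: h1 IH; set a := size _; set b := size q; lia.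
apply: leq_trans H _.
have -> : (\sum_(k < M | k != j) 1 = #|predC1 j|)%N by rewrite -sum1_card.
rewrite cardC1 card_ord; case: M j => [[]|n] //.
Qed.

Lemma poly_int0_ext (p : {poly R}) t K : (size p <= K)%N ->
  poly_int0 p t = \sum_(i < K) p`_i * t ^+ i.+1 / i.+1%:R.
Proof.
move=> hK; rewrite /poly_int0.
rewrite (big_ord_widen K (fun i => p`_i * t ^+ i.+1 / i.+1%:R)) // big_mkcond /=.
apply: eq_bigr => i _; case: ifP => // /negbT; rewrite -leqNgt => h.
by rewrite nth_default // !mul0r.
Qed.

Lemma colloc_unit : colloc_matrix tau \in unitmx.
Proof.
rewrite -unitmx_tr unitmxE unitfE; apply/negP => /det0P [v vn0 vQ].
apply: (negP vn0).
pose p := \sum_(j < M) v 0 j *: lagrange_basis tau j.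
have hsize : (size p <= M)%N.
  apply: (big_ind (fun q : {poly R} => (size q <= M)%N)) => //.
  - by rewrite size_poly0.
  - by move=> x y hx hy; apply: leq_trans (size_add _ _) _; rewrite geq_max hx hy.
  - by move=> j _; apply: leq_trans (size_scale_leq _ _) (lag_size j).
have hsum t : \sum_(i < M) p`_i * t ^+ i.+1 / i.+1%:R
    = \sum_(j < M) v 0 j * poly_int0 (lagrange_basis tau j) t.
  under eq_bigr => i _ do rewrite coef_sum !mulr_suml.
  rewrite exchange_big /=; apply: eq_bigr => j _.
  rewrite (poly_int0_ext _ (lag_size j)) mulr_sumr; apply: eq_bigr => i _.
  by rewrite coefZ !mulrA.
have hQ m : \sum_(j < M) v 0 j * poly_int0 (lagrange_basis tau j) (tau m) = 0.
  apply: etrans (_ : (v *m (colloc_matrix tau)^T) 0 m = 0); last by rewrite vQ mxE.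
  by rewrite mxE; apply: eq_bigr => j _; rewrite !mxE.
pose P := \sum_(i < M) (p`_i / i.+1%:R) *: 'X^(i.+1).
have hP t : P.[t] = \sum_(i < M) p`_i * t ^+ i.+1 / i.+1%:R.
  rewrite horner_sum; apply: eq_bigr => i _.
  by rewrite hornerZ hornerXn mulrAC.
have Psize : (size P <= M.+1)%N.
  apply: (big_ind (fun q : {poly R} => (size q <= M.+1)%N)).
  - by rewrite size_poly0.
  - by move=> x y hx hy; apply: leq_trans (size_add _ _) _; rewrite geq_max hx hy.
  - by move=> i _; apply: leq_trans (size_scale_leq _ _) _; rewrite size_polyXn ltnS ltn_ord.
have P0 : P = 0.
  apply/eqP; apply: contraT => Pn0.
  pose rs := 0 :: [seq tau i | i <- enum 'I_M].
  have hr : all (root P) rs.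
    rewrite /= rootE hP; apply/andP; split.
      by apply/eqP/big1 => i _; rewrite expr0n /= mulr0 mul0r.
    apply/allP => x /mapP [m _ ->]; rewrite rootE hP hsum; exact/eqP/hQ.
  have hu : uniq rs.
    rewrite /= map_inj_uniq ?enum_uniq ?andbT; last exact: tau_inj.
    apply/mapP => [[m _ e]]; by move: (tau_pos m); rewrite -e ltxx.
  have := max_poly_roots Pn0 hr hu.
  by rewrite /= size_map size_enum_ord ltnNge (leq_trans Psize).
have pc i : p`_i = 0.
  have [hi|hi] := ltnP i M; last by rewrite nth_default // (leq_trans hsize hi).
  have := congr1 (fun q : {poly R} => q`_i.+1) P0; rewrite coef0 coef_sum.
  rewrite (bigD1 (Ordinal hi)) //= coefZ coefXn eqxx mulr1 big1 ?addr0.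
    by move/eqP; rewrite mulf_eq0 invr_eq0 pnatr_eq0 orbF => /eqP.
  move=> k hk; rewrite coefZ coefXn eqSS.
  have -> : (i == k) = false.
    by apply: contraNF hk => /eqP e; apply/eqP/val_inj.
  by rewrite mulr0.
have p0 : p = 0 by apply/polyP => i; rewrite pc coef0.
apply/eqP/rowP => m; rewrite mxE.
have := congr1 (fun q : {poly R} => q.[tau m]) p0.
rewrite /= horner0 horner_sum (bigD1 m) //= hornerZ lag_eval eqxx mulr1 big1 ?addr0 //.
by move=> j jm; rewrite hornerZ lag_eval eq_sym (negbTE jm) mulr0.
Qed.

End Colloc.


Section Tens.
Variable F : comPzRingType.

Lemma tens11 m n : (1%:M : 'M[F]_m) *t (1%:M : 'M[F]_n) = 1%:M.
Proof.
apply/matrixP => i j.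
case: (mxtens_indexP i) => i0 i1; case: (mxtens_indexP j) => j0 j1.
rewrite tensmxE !mxE -natrM mulnb.
by rewrite (inj_eq (can_inj (@mxtens_indexK _ _))) xpair_eqE.
Qed.

Lemma tensBr m n p q (A : 'M[F]_(m, n)) (B C : 'M[F]_(p, q)) :
  A *t B - A *t C = A *t (B - C).
Proof. by apply/matrixP => i j; rewrite !mxE mulrBr. Qed.

Lemma tensBl m n p q (A B : 'M[F]_(m, n)) (C : 'M[F]_(p, q)) :
  A *t C - B *t C = (A - B) *t C.
Proof. by apply/matrixP => i j; rewrite !mxE mulrBl. Qed.

Lemma tens_pow L M N (Y : 'M[F]_M) k :
  ((1%:M : 'M[F]_L) *t (Y *t (1%:M : 'M[F]_N))) ^+ k
  = (1%:M : 'M[F]_L) *t ((Y ^+ k) *t (1%:M : 'M[F]_N)).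
Proof.
elim: k => [|k IH]; first by rewrite !expr0 !tens11.
rewrite exprS IH -mulmxE !tensmx_mul !mulmx1 exprS.
by rewrite mulmxE.
Qed.

Lemma nilp M (Y : 'M[F]_M) : (forall i j : 'I_M, (j <= i)%N -> Y i j = 0) ->
  forall k (i j : 'I_M), (j < i + k)%N -> (Y ^+ k) i j = 0.
Proof.
move=> hY; elim=> [|k IH] i j hij.
  rewrite expr0 mxE; case: eqVneq => [e|//]; by move: hij; rewrite e addn0 ltnn.
rewrite exprS -mulmxE mxE big1 // => l _.
have [hl|hl] := leqP (val l) (val i); first by rewrite hY // mul0r.
by rewrite IH ?mulr0 //; move: hl hij; rewrite /=; lia.
Qed.

Lemma nilpM M (Y : 'M[F]_M) : (forall i j : 'I_M, (j <= i)%N -> Y i j = 0) ->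
  Y ^+ M = 0.
Proof.
move=> hY; apply/matrixP => i j; rewrite mxE; apply: nilp => //.
have := ltn_ord j; lia.
Qed.

End Tens.

Section Ar.
Variable R : realType.
Lemma arCGC (n t1 t2 P E mu g b : R) : 0 <= n -> 0 <= t1 -> 0 <= t2 -> 0 <= P ->
  0 <= g -> 0 <= b -> 1 <= mu -> P * mu <= E ->
  n + t1 * P * t2 * (n + mu * g + b) <= n + t1 * t2 * E * (n + g + b).
Proof.
move=> n0 t10 t20 P0 g0 b0 mu1 hP.
have PE : P <= E by nra.
have h : P * (n + mu * g + b) <= E * (n + g + b) by nra.
have t0 : 0 <= t1 * t2 by apply: mulr_ge0.
rewrite lerD2l. 
have -> : t1 * P * t2 * (n + mu * g + b) = (t1 * t2) * (P * (n + mu * g + b)) by ring.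
have -> : t1 * t2 * E * (n + g + b) = (t1 * t2) * (E * (n + g + b)) by ring.
exact: ler_wpM2l.
Qed.

Lemma arFin (x y q r0 ccg mu : R) : 0 < mu -> 0 <= x -> 0 <= y -> 0 <= q -> 0 <= r0 ->
  x <= q * (r0 / mu) -> y <= ccg ->
  x * y <= (q * r0 * ccg + 1) / mu.
Proof.
move=> mu0 x0 y0 q0 r00 hx hy.
rewrite ler_pdivlMr //.
have hx' : x * mu <= q * r0 by move: hx; rewrite mulrA ler_pdivlMr.
have h1 : x * mu * y <= q * r0 * y by apply: ler_wpM2r.
have h2 : q * r0 * y <= q * r0 * ccg by apply: ler_wpM2l => //; apply: mulr_ge0.
have -> : x * y * mu = x * mu * y by ring.
lra.
Qed.
End Ar.
Section Ar2.
Variable R : realType.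
Lemma pos4 (x y z : R) : 0 <= x -> 0 <= y -> 0 <= z -> 0 < 1 + x + y + z.
Proof. move=> *; lra. Qed.
Lemma pos1 (x : R) : 0 <= x -> 0 < x + 1.
Proof. move=> *; lra. Qed.
Lemma sum4_le (x y z mu : R) : 0 <= x -> 0 <= y -> 0 <= z -> 1 + x + y + z < mu ->
  [/\ 1 <= mu, 0 < mu, x <= mu, y <= mu & z <= mu].
Proof. move=> *; split; lra. Qed.
End Ar2.


Lemma main_abstract (R : realType) n nc (D Dinv G B : 'M[R[i]]_n)
  (Dc Dcinv Bc : 'M[R[i]]_nc) (TFC : 'M[R[i]]_(nc, n)) (TCF : 'M[R[i]]_(n, nc)) k :
  D *m Dinv = 1%:M -> Dc *m Dcinv = 1%:M -> (1%:M - Dinv *m G) ^+ k = 0 ->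
  exists mu_star c : R, 0 < mu_star /\ 0 < c /\
    forall mu : R, mu_star < mu ->
      (1%:M - (mu%:C)%C *: D) \in unitmx ->
      (1%:M - (mu%:C)%C *: Dc - Bc) \in unitmx ->
      spectral_radius
        ((1%:M - invmx (1%:M - (mu%:C)%C *: D) *m (1%:M - (mu%:C)%C *: G - B)) ^+ k
         *m (1%:M - TCF *m invmx (1%:M - (mu%:C)%C *: Dc - Bc) *m TFC
               *m (1%:M - (mu%:C)%C *: G - B)))
      <= c / mu.
Proof.
move=> DD DDc Kk.
set K := 1%:M - Dinv *m G.
have [d d0 ed] : exists2 d, 0 <= d & nm Dinv = d by exists (nm Dinv); rewrite ?nm_ge0.
have [b b0 eb] : exists2 d, 0 <= d & nm B = d by exists (nm B); rewrite ?nm_ge0.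
have [kap kap0 ekap] : exists2 d, 0 <= d & nm K = d by exists (nm K); rewrite ?nm_ge0.
have [g g0 eg] : exists2 d, 0 <= d & nm G = d by exists (nm G); rewrite ?nm_ge0.
have [dc dc0 edc] : exists2 d, 0 <= d & nm Dcinv = d by exists (nm Dcinv); rewrite ?nm_ge0.
have [bc bc0 ebc] : exists2 d, 0 <= d & nm (1%:M - Bc) = d by exists (nm (1%:M - Bc)); rewrite ?nm_ge0.
have [t1 t10 et1] : exists2 d, 0 <= d & nm TCF = d by exists (nm TCF); rewrite ?nm_ge0.
have [t2 t20 et2] : exists2 d, 0 <= d & nm TFC = d by exists (nm TFC); rewrite ?nm_ge0.
have [N N0 eN] : exists2 d : R, 0 <= d & n%:R = d by exists n%:R.
have [Nc Nc0 eNc] : exists2 d : R, 0 <= d & nc%:R = d by exists nc%:R.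
pose r0 := 2 * N * d * (b + kap).
pose a := kap + 1.
pose E := 2 * Nc * dc.
pose ccg := N + t1 * t2 * E * (N + g + b).
pose q := k%:R * N * a ^+ k.
have nd0 : 0 <= 2 * N * d by rewrite !mulr_ge0.
have r00 : 0 <= r0 by rewrite mulr_ge0 // addr_ge0.
have bd0 : 0 <= 2 * bc * dc by rewrite !mulr_ge0.
have a1 : 1 <= a by rewrite lerDr.
have q0 : 0 <= q by rewrite !mulr_ge0 // exprn_ge0 // (le_trans _ a1).
have E0 : 0 <= E by rewrite !mulr_ge0.
have ccg0 : 0 <= ccg by rewrite addr_ge0 // !mulr_ge0 // !addr_ge0.
exists (1 + 2 * N * d + r0 + 2 * bc * dc), (q * r0 * ccg + 1).
split; first exact: pos4.
split; first exact/pos1/mulr_ge0/ccg0/mulr_ge0.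
move=> mu hmu Pu Ptu.
have [mu1 mu0 hmu1 hmu2 hmu3] := sum4_le nd0 r00 bd0 hmu.
set Pi := invmx (1%:M - (mu%:C)%C *: D).
have hPi : nm Pi <= 2 * N * d / mu.
  by rewrite -eN -ed; apply: inv_bound => //; rewrite nm1 eN ed.
pose Rm := Pi *m B - Pi *m K.
have eTS : 1%:M - Pi *m (1%:M - (mu%:C)%C *: G - B) = K + Rm by apply: TS_decomp.
have hR : nm Rm <= r0 / mu.
  apply: le_trans (nmB _ _) _.
  apply: le_trans (lerD (nmM _ _) (nmM _ _)) _.
  rewrite -mulrDr /r0 mulrAC eb ekap.
  by apply: ler_pM => //; [exact: nm_ge0 | rewrite addr_ge0].
have hr1 : r0 / mu <= 1 by rewrite ler_pdivrMr // mul1r.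
have hX : nm (K + Rm) <= a.
  by apply: le_trans (nmD _ _) _; rewrite /a ekap lerD2l (le_trans hR).
have hXK : nm (K + Rm - K) <= r0 / mu by rewrite addrC addKr.
have ka : nm K <= a by rewrite ekap /a lerDl.
have hpow := pow_bound k a1 hX ka hXK.
rewrite Kk subr0 eN in hpow.
set Pti := invmx (1%:M - (mu%:C)%C *: Dc - Bc).
have hPti : nm Pti <= E / mu.
  rewrite /E -eNc -edc.
  apply: (@inv_bound _ _ _ (1%:M - Bc) Dc Dcinv) => //; first by rewrite addrAC.
  by rewrite ebc edc.
set Cm := 1%:M - (mu%:C)%C *: G - B.
have hCm : nm Cm <= N + mu * g + b.
  rewrite /Cm; apply: le_trans (nmB _ _) _; rewrite eb lerD2r.
  apply: le_trans (nmB _ _) _; rewrite nm1 eN lerD2l nmZ ncmu ?eg //; exact: ltW.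
have hCGC : nm (1%:M - TCF *m Pti *m TFC *m Cm) <= ccg.
  apply: le_trans (nmB _ _) _; rewrite nm1 eN.
  apply: le_trans (arCGC N0 t10 t20 (nm_ge0 Pti) g0 b0 mu1 _); last first.
    by move: hPti; rewrite ler_pdivlMr.
  rewrite lerD2l; apply: le_trans (nmM _ _) _.
  apply: ler_pM; [exact: nm_ge0 | exact: nm_ge0 | | exact: hCm].
  apply: le_trans (nmM _ _) _; apply: ler_pM; [exact: nm_ge0 | exact: nm_ge0 | | by rewrite et2].
  apply: le_trans (nmM _ _) _; apply: ler_pM; [exact: nm_ge0 | exact: nm_ge0 | by rewrite et1 | by []].
apply: le_trans (spec_le _) _.
rewrite eTS; apply: le_trans (nmM _ _) _.
apply: arFin => //; exact: nm_ge0.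
Qed.


Theorem theorem3 (R : realType) (L M N Mc Nc : nat)
  (tau : 'I_M -> R) (tauc : 'I_Mc -> R)
  (LQ UQ : 'M[R]_M) (LQc UQc : 'M[R]_Mc)
  (A : 'M[R[i]]_N) (Ac : 'M[R[i]]_Nc)
  (TFQ : 'M[R]_(Mc, M)) (TFA : 'M[R]_(Nc, N))
  (TCQ : 'M[R]_(M, Mc)) (TCA : 'M[R]_(N, Nc)) :
  (0 < L)%N -> (0 < N)%N -> (0 < Nc)%N -> (Mc <= M)%N -> (Nc <= N)%N ->
  right_gauss_radau tau -> right_gauss_radau tauc ->
  (colloc_matrix tau)^T = LQ *m UQ ->
  unit_lower_triangular LQ -> upper_triangular UQ ->
  (colloc_matrix tauc)^T = LQc *m UQc ->
  unit_lower_triangular LQc -> upper_triangular UQc ->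
  A \in unitmx -> Ac \in unitmx ->
  (subdiag_mx L *t Hmat Mc Nc) *m transfer L TFQ TFA
    = transfer L TFQ TFA *m (subdiag_mx L *t Hmat M N) ->
  forall k : nat, (M <= k)%N ->
  exists mu_star c : R, 0 < mu_star /\ 0 < c /\
    forall mu : R, mu_star < mu ->
      Phat L mu UQ^T A \in unitmx ->
      Ptilde L mu UQc^T Ac \in unitmx ->
      spectral_radius
        (T_PFASST L mu k (colloc_matrix tau) UQ^T A UQc^T Ac
           (transfer L TFQ TFA) (transfer L TCQ TCA))
      <= c / mu.
Proof.
move=> _ _ _ _ _ gr grc hLU hL _ hLUc _ _ Au Acu _ k hk.
case: gr => M0 tlt tpos _ _.
case: grc => _ tclt tcpos _ _.
have UQu : UQ \in unitmx.
  by move: (colloc_unit tlt tpos); rewrite -unitmx_tr hLU unitmx_mul => /andP[].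
have UQcu : UQc \in unitmx.
  by move: (colloc_unit tclt tcpos); rewrite -unitmx_tr hLUc unitmx_mul => /andP[].
pose D := (1%:M : 'M[R[i]]_L) *t (cplx_mx UQ^T *t A).
pose Dinv := (1%:M : 'M[R[i]]_L) *t (cplx_mx (invmx UQ^T) *t invmx A).
pose G := (1%:M : 'M[R[i]]_L) *t (cplx_mx (colloc_matrix tau) *t A).
pose B : 'M[R[i]]_(L * (M * N)) := subdiag_mx L *t Hmat M N.
pose Dc := (1%:M : 'M[R[i]]_L) *t (cplx_mx UQc^T *t Ac).
pose Dcinv := (1%:M : 'M[R[i]]_L) *t (cplx_mx (invmx UQc^T) *t invmx Ac).
pose Bc : 'M[R[i]]_(L * (Mc * Nc)) := subdiag_mx L *t Hmat Mc Nc.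
pose K := 1%:M - Dinv *m G.
have DD : D *m Dinv = 1%:M.
  rewrite /D /Dinv !tensmx_mul mulmx1 mulmxV // /cplx_mx -map_mxM mulmxV ?unitmx_tr //.
  by rewrite map_mx1 !tens11.
have DDc : Dc *m Dcinv = 1%:M.
  rewrite /Dc /Dcinv !tensmx_mul mulmx1 mulmxV // /cplx_mx -map_mxM mulmxV ?unitmx_tr //.
  by rewrite map_mx1 !tens11.
have Kk : K ^+ k = 0.
  have eK : K = (1%:M : 'M[R[i]]_L) *t ((1%:M - cplx_mx LQ^T) *t (1%:M : 'M[R[i]]_N)).
    rewrite /K /Dinv /G !tensmx_mul mulmx1 mulVmx // /cplx_mx -map_mxM.
    have -> : invmx UQ^T *m colloc_matrix tau = LQ^T.
      by rewrite -[colloc_matrix tau]trmxK hLU trmx_mul mulmxA mulVmx ?unitmx_tr // mul1mx.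
    by rewrite -tensBl -tensBr !tens11.
  have -> : k = (k - M + M)%N by rewrite subnK.
  rewrite exprD eK !tens_pow (@nilpM _ _ (1%:M - cplx_mx LQ^T)) ?tens0mx ?tensmx0 ?mulr0 //.
  move=> i j hij; rewrite !mxE; case: hL => hL0 hL1.
  have [e|ne] := eqVneq i j.
    by rewrite e hL1 rmorph1 subrr.
  rewrite hL0 ?rmorph0 ?subrr //.
  by rewrite ltn_neqAle hij andbT; apply: contra ne => /eqP e; apply/eqP/val_inj.
have [mu_star [c [h1 [h2 h3]]]] := main_abstract B Bc (transfer L TFQ TFA) (transfer L TCQ TCA) DD DDc Kk.
exists mu_star, c; split => //; split => // mu hmu Pu Ptu.
Qed.
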